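(* For every integer $n\ge0$, \[ \sum_{m=1}^{\infty}\frac{(-1)^{m+1}(2m+2n+3)}{(m+1)(m+2n+2)}H_m=2\ln2\sum_{k=0}^{n}\frac{1}{2k+1}-\sum_{j=1}^{2n+1}\frac1j\sum_{k=1}^{j}\frac{(-1)^{k-1}}{k}. \]
   Context: $H_m=\sum_{j=1}^m 1/j$ is the $m$-th harmonic number. *)

(* Defs.v *)
From Stdlib Require Import Reals.
Open Scope R_scope.

Fixpoint H (m : nat) : R :=
  match m with
  | O => 0
  | S k => H k + / INR (S k)
  end.

Fixpoint A (j : nat) : R :=
  match j with
  | O => 0
  | S k => A k + (-1) ^ k / INR (S k)
  end.

Definition term (n m : nat) : R :=
  (-1) ^ (m + 1) * (2 * INR m + 2 * INR n + 3)
  / ((INR m + 1) * (INR m + 2 * INR n + 2)) * H m.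

(* Main.v *)
Require Import Defs.
From Stdlib Require Import Reals Lra Lia FunctionalExtensionality Arith.
Open Scope R_scope.

Lemma dpl_eq f g x l l' : (forall y, f y = g y) -> l = l' ->
  derivable_pt_lim f x l -> derivable_pt_lim g x l'.
Proof.
  intros Hfg Hl H. replace g with f by (apply functional_extensionality; auto).
  subst; exact H.
Qed.

Lemma inv_S_cv : Un_cv (fun n => / INR (S n)) 0.
Proof.
  apply (cv_infty_cv_0 (fun n => INR (S n))).
  intro M. destruct (INR_unbounded M) as [N HN]. exists N. intros n Hn.
  apply le_INR in Hn. rewrite S_INR. lra.
Qed.

Fixpoint Q (M:nat) (x:R) : R := match M with O => 0 | S k => Q k x + (-1)^k * x^(S k) / INR (S k) end.
Fixpoint Qd (M:nat) (x:R) : R := match M with O => 0 | S k => Qd k x + (-1)^k * x^k end.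

Lemma Q_der M x : derivable_pt_lim (Q M) x (Qd M x).
Proof.
  induction M as [|k IH]; cbn [Q Qd].
  - apply (dpl_eq (fct_cte 0) _ x 0 0); [reflexivity|reflexivity|apply derivable_pt_lim_const].
  - apply (dpl_eq (fun y => Q k y + ((-1)^k / INR (S k)) * y^(S k)) _ x
       (Qd k x + ((-1)^k / INR (S k)) * (INR (S k) * x ^ pred (S k)))).
    + intro y. unfold Rdiv. ring.
    + cbn [pred]. field. apply not_0_INR. lia.
    + apply (derivable_pt_lim_plus (Q k) (mult_real_fct ((-1)^k / INR (S k)) (fun y => y^(S k)))).
      * exact IH.
      * apply derivable_pt_lim_scal. apply derivable_pt_lim_pow.
Qed.

Lemma Qd_geom M x : Qd M x * (1+x) = 1 - (-1)^M * x^M.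
Proof. induction M as [|k IH]; simpl. ring. rewrite Rmult_plus_distr_r, IH. ring. Qed.

Lemma Q1 M : Q M 1 = A M.
Proof. induction M as [|k IH]; simpl. reflexivity. rewrite IH, pow1. simpl. unfold Rdiv. ring_simplify. reflexivity. Qed.

Lemma Q0 M : Q M 0 = 0.
Proof. induction M as [|k IH]; simpl. reflexivity. rewrite IH. unfold Rdiv. ring. Qed.

Lemma sgn2 M : (-1)^M * (-1)^M = 1.
Proof. rewrite <- Rpow_mult_distr. replace (-1 * -1) with 1 by ring. apply pow1. Qed.

Lemma ln1p_der y : -1 < y -> derivable_pt_lim (fun t => ln (1 + t)) y (/ (1 + y)).
Proof.
  intro Hy.
  apply (dpl_eq (comp ln (fun t => 1 + t)) _ y (/ (1+y) * 1)); [reflexivity| ring |].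
  apply derivable_pt_lim_comp.
  - apply (dpl_eq (plus_fct (fct_cte 1) id) _ y (0 + 1)); [reflexivity|ring|].
    apply derivable_pt_lim_plus. apply derivable_pt_lim_const. apply derivable_pt_lim_id.
  - apply derivable_pt_lim_ln. lra.
Qed.

Definition u M (y:R) := (-1)^M * (ln (1 + y) - Q M y).

Lemma u_der M y : 0 <= y -> derivable_pt_lim (u M) y (y^M / (1+y)).
Proof.
  intro Hy. unfold u.
  apply (dpl_eq (mult_real_fct ((-1)^M) (minus_fct (fun t => ln (1+t)) (Q M))) _ y
    ((-1)^M * (/ (1+y) - Qd M y))); [reflexivity| |].
  - pose proof (Qd_geom M y) as G.
    assert (E: Qd M y = (1 - (-1)^M * y^M) / (1+y)) by (rewrite <- G; field; lra).
    rewrite E. unfold Rdiv.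
    replace ((-1)^M * (/(1+y) - (1 - (-1)^M*y^M) * /(1+y))) with (((-1)^M*(-1)^M) * y^M * /(1+y)) by ring.
    rewrite sgn2. ring.
  - apply derivable_pt_lim_scal. apply derivable_pt_lim_minus.
    apply ln1p_der; lra. apply Q_der.
Qed.

Lemma A_bound M : Rabs (ln 2 - A M) <= / INR (S M).
Proof.
  assert (HS : 0 < INR (S M)) by (apply lt_0_INR; lia).
  assert (u0 : u M 0 = 0) by (unfold u; rewrite Q0, Rplus_0_r, ln_1; ring).
  assert (u1 : u M 1 = (-1)^M * (ln 2 - A M)) by (unfold u; rewrite Q1; f_equal; f_equal; f_equal; ring).
  assert (Hlo : 0 <= u M 1).
  { destruct (MVT_cor2 (u M) (fun y => y^M/(1+y)) 0 1) as [c [Hc Hc2]]; [lra| |].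
    intros c Hc. apply u_der. lra.
    rewrite u0 in Hc. rewrite Rminus_0_r in Hc. rewrite Hc.
    apply Rmult_le_pos; [|lra]. apply Rmult_le_pos. apply pow_le; lra.
    left; apply Rinv_0_lt_compat; lra. }
  assert (Hhi : u M 1 - / INR (S M) <= 0).
  { destruct (MVT_cor2 (fun y => u M y - y^(S M) / INR (S M))
       (fun y => y^M/(1+y) - y^M) 0 1) as [c [Hc Hc2]]; [lra| |].
    - intros c Hc.
      apply (dpl_eq (minus_fct (u M) (mult_real_fct (/ INR (S M)) (fun y => y^(S M)))) _ c
         (c^M/(1+c) - / INR (S M) * (INR (S M) * c ^ pred (S M)))).
      + intro y. unfold minus_fct, mult_real_fct, Rdiv. ring.
      + simpl pred. field. lra.
      + apply derivable_pt_lim_minus. apply u_der; lra.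
        apply derivable_pt_lim_scal, derivable_pt_lim_pow.
    - rewrite u0 in Hc. rewrite pow1 in Hc. simpl (0 ^ S M) in Hc.
      replace (u M 1 - / INR (S M)) with (u M 1 - 1 / INR (S M) - (0 - 0 * 0 ^ M / INR (S M))) by (field; lra).
      rewrite Hc. assert (0 <= c^M) by (apply pow_le; lra).
      assert (c^M / (1+c) <= c^M).
      { unfold Rdiv. rewrite <- (Rmult_1_r (c^M)) at 2. apply Rmult_le_compat_l; auto.
        rewrite <- Rinv_1. apply Rinv_le_contravar; lra. }
      rewrite Rminus_0_r, Rmult_1_r; lra. }
  rewrite u1 in Hlo, Hhi.
  replace (ln 2 - A M) with ((-1)^M * ((-1)^M * (ln 2 - A M))) by (rewrite <- Rmult_assoc, sgn2; ring).
  rewrite Rabs_mult, pow_1_abs, Rmult_1_l. apply Rabs_le. lra.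
Qed.

Lemma A_cv : Un_cv A (ln 2).
Proof.
  intros eps He. destruct (inv_S_cv eps He) as [N HN]. exists N. intros n Hn.
  specialize (HN n Hn). unfold Rdist in *. rewrite Rminus_0_r, Rabs_pos_eq in HN
    by (left; apply Rinv_0_lt_compat, lt_0_INR; lia).
  rewrite Rabs_minus_sym. eapply Rle_lt_trans. apply A_bound. exact HN.
Qed.

Lemma A_S j : A (S j) = A j + (-1)^j / INR (S j). Proof. reflexivity. Qed.
Lemma H_S j : H (S j) = H j + / INR (S j). Proof. reflexivity. Qed.
Lemma pow_m1_S j : (-1)^(S j) = - (-1)^j. Proof. simpl. ring. Qed.
Lemma pow_m1_even j k : (-1)^(j + 2*k) = (-1)^j.
Proof. rewrite pow_add, pow_mult. replace ((-1)^2) with 1 by ring. rewrite pow1. ring. Qed.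

Definition g (N s : nat) : R :=
  (- (-1)^s * A (S N - s) + A (S N - s + s) - A s) / INR s.
Fixpoint Fs (N m : nat) : R := match m with O => 0 | S s => Fs N s + g N (S s) end.
Fixpoint Rs (f : nat -> R) (N m : nat) : R := match m with O => 0 | S j => Rs f N j + f (S N + j)%nat end.

Lemma Rs_step f N m : Rs f (S N) m - Rs f N m = f (S N + m)%nat - f (S N).
Proof.
  induction m as [|j IH]; cbn [Rs].
  - rewrite Nat.add_0_r. ring.
  - replace (S (S N) + j)%nat with (S N + S j)%nat by lia.
    replace (S N + j)%nat with (S N + j)%nat by lia. lra.
Qed.

Lemma g_step N s : g (S N) (S s) - g N (S s)
   = (-1)^N * (H (S N - s) - H (S N - S s)) / INR (S (S N)).
Proof.
  unfold g. destruct (le_lt_dec s N) as [Hle|Hlt].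
  - destruct (Nat.le_exists_sub s N Hle) as [k [Hk _]]. subst N.
    replace (S (S (k + s)) - S s)%nat with (S k) by lia.
    replace (S (k + s) - S s)%nat with k by lia.
    replace (S (k + s) - s)%nat with (S k) by lia.
    replace (S k + S s)%nat with (S (k + S s)) by lia.
    rewrite (A_S k), (A_S (k + S s)), (H_S k).
    rewrite !pow_add, pow_m1_S.
    rewrite !S_INR, !plus_INR, !S_INR.
    pose proof (pos_INR k) as Hk0. pose proof (pos_INR s) as Hs0.
    field. lra.
  - replace (S (S N) - S s)%nat with 0%nat by lia.
    replace (S N - S s)%nat with 0%nat by lia.
    replace (S N - s)%nat with 0%nat by lia.
    change (A 0) with 0. change (H 0) with 0. simpl (0 + S s)%nat. unfold Rdiv. ring.
Qed.

Lemma Fs_step N m : Fs (S N) m - Fs N m = (-1)^N * (H (S N) - H (S N - m)) / INR (S (S N)).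
Proof.
  induction m as [|s IH]; cbn [Fs].
  - rewrite Nat.sub_0_r. unfold Rdiv. ring.
  - pose proof (g_step N s). unfold Rdiv in *. lra.
Qed.

Lemma Fs0 m : Fs 0 m = 0.
Proof.
  induction m as [|s IH]; cbn [Fs]. reflexivity.
  rewrite IH. unfold g. replace (1 - S s)%nat with 0%nat by lia. simpl (0 + S s)%nat.
  simpl A at 1. unfold Rdiv. ring.
Qed.

Definition fr (r k : nat) : R := (-1)^k * H (k - r) / INR (S k).

Fixpoint P (n N : nat) : R := match N with O => 0 | S M => P n M + term n (S M) end.

Lemma Rs0 r m : (m <= r)%nat -> Rs (fr r) 0 m = 0.
Proof.
  induction m as [|j IH]; intro Hm; cbn [Rs]. reflexivity.
  rewrite IH by lia. unfold fr. replace (1 + j - r)%nat with 0%nat by lia.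
  change (H 0) with 0. unfold Rdiv. ring.
Qed.

Lemma P_eq n N : P n N = Fs N (2*n+1) + Rs (fr (2*n+1)) N (2*n+1).
Proof.
  induction N as [|N IH]; cbn [P].
  - rewrite Fs0, Rs0 by lia. ring.
  - pose proof (Fs_step N (2*n+1)) as E1. pose proof (Rs_step (fr (2*n+1)) N (2*n+1)) as E2.
    assert (T : term n (S N) = (-1)^N * (H (S N) - H (S N - (2*n+1))) / INR (S (S N))
       + (fr (2*n+1) (S N + (2*n+1)) - fr (2*n+1) (S N))).
    { unfold term, fr. replace (S N + (2*n+1) - (2*n+1))%nat with (S N) by lia.
      replace (S N + 1)%nat with (N + 2*1)%nat by lia.
      replace (S N + (2*n+1))%nat with (N + 2*(n+1))%nat by lia.
      rewrite !pow_m1_even, pow_m1_S.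
      rewrite !S_INR, !plus_INR, !mult_INR, !S_INR. simpl (INR 2).
      rewrite ?plus_INR, ?S_INR, ?INR_0, ?INR_1.
      pose proof (pos_INR N) as HN0. pose proof (pos_INR n) as Hn0.
      field. lra. }
    lra.
Qed.

Lemma sum_P n N : sum_f_R0 (fun i => term n (S i)) N = P n (S N).
Proof. induction N as [|N IH]. simpl. ring. cbn [sum_f_R0 P]. rewrite IH. reflexivity. Qed.

Lemma cv_shift u l (phi : nat -> nat) c : Un_cv u l -> (forall N, (N <= phi N + c)%nat) ->
  Un_cv (fun N => u (phi N)) l.
Proof.
  intros Hu Hphi eps He. destruct (Hu eps He) as [N0 HN0]. exists (N0 + c)%nat.
  intros N HN. apply HN0. specialize (Hphi N). lia.
Qed.

Lemma cv_const k : Un_cv (fun _ => k) k.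
Proof. intros eps He. exists 0%nat. intros. unfold Rdist. rewrite Rminus_diag, Rabs_R0. exact He. Qed.

Lemma cv_lin a b la lb c d e : Un_cv a la -> Un_cv b lb ->
  Un_cv (fun N => (c * a N + b N - d) / e) ((c * la + lb - d) / e).
Proof.
  intros Ha Hb. unfold Rdiv.
  apply (CV_mult (fun N => c * a N + b N - d) (fun _ => / e)); [|apply cv_const].
  apply (CV_minus (fun N => c * a N + b N) (fun _ => d)); [|apply cv_const].
  apply (CV_plus (fun N => c * a N) b); [|exact Hb].
  apply (CV_mult (fun _ => c) a); [apply cv_const|exact Ha].
Qed.

Definition gl (s : nat) : R := (- (-1)^s * ln 2 + ln 2 - A s) / INR s.
Fixpoint Fl (m : nat) : R := match m with O => 0 | S s => Fl s + gl (S s) end.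

Lemma g_cv s : Un_cv (fun N => g N s) (gl s).
Proof.
  unfold g, gl. apply cv_lin.
  - apply (cv_shift A _ (fun N => S N - s)%nat s A_cv). intro; lia.
  - apply (cv_shift A _ (fun N => S N - s + s)%nat 0 A_cv). intro; lia.
Qed.

Lemma Fs_cv m : Un_cv (fun N => Fs N m) (Fl m).
Proof.
  induction m as [|s IH]; cbn [Fs Fl].
  - apply cv_const.
  - apply (CV_plus (fun N => Fs N s) (fun N => g N (S s))). exact IH. apply g_cv.
Qed.

Lemma H_nonneg k : 0 <= H k.
Proof. induction k as [|k IH]; cbn [H]. lra. pose proof (Rinv_0_lt_compat (INR (S k)) (lt_0_INR _ (Nat.lt_0_succ k))). lra. Qed.

Lemma H_mono a b : (a <= b)%nat -> H a <= H b.
Proof.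
  induction 1 as [|b Hab IH]. lra. cbn [H].
  pose proof (Rinv_0_lt_compat (INR (S b)) (lt_0_INR _ (Nat.lt_0_succ b))). lra.
Qed.

Lemma H_sum k : H (S k) = sum_f_R0 (fun i => / INR (S i)) k.
Proof. induction k as [|k IH]. simpl. ring. rewrite H_S, IH. reflexivity. Qed.

Lemma H_cv : Un_cv (fun k => H k / INR (S k)) 0.
Proof.
  pose proof (Cesaro_1 _ _ inv_S_cv) as C.
  intros eps He. destruct (C eps He) as [N0 HN0]. exists (S N0). intros k Hk.
  destruct k as [|k]; [lia|]. specialize (HN0 (S k) ltac:(lia)).
  unfold Rdist in *. rewrite Rminus_0_r in *. simpl pred in HN0. rewrite <- H_sum in HN0.
  pose proof (H_nonneg (S k)) as Hn.
  assert (HSk : 0 < INR (S k)) by (apply lt_0_INR; lia).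
  assert (HSSk : INR (S k) <= INR (S (S k))) by (apply le_INR; lia).
  rewrite Rabs_pos_eq in * by (apply Rmult_le_pos; [lra|left; apply Rinv_0_lt_compat; lra]).
  eapply Rle_lt_trans; [|exact HN0]. apply Rmult_le_compat_l; [lra|].
  apply Rinv_le_contravar; lra.
Qed.

Lemma fr_cv r : Un_cv (fr r) 0.
Proof.
  intros eps He. destruct (H_cv eps He) as [N0 HN0]. exists N0. intros k Hk.
  specialize (HN0 k Hk). unfold Rdist, fr in *. rewrite Rminus_0_r in *.
  assert (HSk : 0 < INR (S k)) by (apply lt_0_INR; lia).
  eapply Rle_lt_trans; [|exact HN0].
  unfold Rdiv. rewrite !Rabs_mult, pow_1_abs, Rmult_1_l.
  apply Rmult_le_compat_r; [apply Rabs_pos|].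
  rewrite !Rabs_pos_eq by apply H_nonneg. apply H_mono. lia.
Qed.

Lemma Rs_cv r m : Un_cv (fun N => Rs (fr r) N m) 0.
Proof.
  induction m as [|j IH]; cbn [Rs].
  - apply cv_const.
  - replace 0 with (0 + 0) by ring.
    apply (CV_plus (fun N => Rs (fr r) N j) (fun N => fr r (S N + j)%nat)). exact IH.
    apply (cv_shift (fr r) 0 (fun N => S N + j)%nat 0 (fr_cv r)). intro; lia.
Qed.

Fixpoint Bs (m : nat) : R := match m with O => 0 | S s => Bs s + / INR (S s) * A (S s) end.

Lemma Fl_eq m : Fl m = ln 2 * (H m + A m) - Bs m.
Proof.
  induction m as [|s IH]; cbn [Fl Bs].
  - simpl. ring.
  - rewrite IH. unfold gl. rewrite H_S. rewrite pow_m1_S.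
    assert (0 < INR (S s)) by (apply lt_0_INR; lia).
    rewrite (A_S s). field. lra.
Qed.

Lemma HA_odd n : H (2*n+1) + A (2*n+1) = 2 * sum_f_R0 (fun k => / (2 * INR k + 1)) n.
Proof.
  induction n as [|n IH].
  - simpl. field.
  - replace (2 * S n + 1)%nat with (S (S (2*n+1))) by lia.
    rewrite !H_S, !A_S. cbn [sum_f_R0].
    replace ((-1)^(S (2*n+1))) with 1.
    2:{ replace (S (2*n+1)) with (0 + 2*(n+1))%nat by lia. rewrite pow_m1_even. simpl. ring. }
    replace ((-1)^(2*n+1)) with (-1).
    2:{ replace (2*n+1)%nat with (1 + 2*n)%nat by lia. rewrite pow_m1_even. simpl. ring. }
    replace (2 * (sum_f_R0 (fun k => / (2 * INR k + 1)) n + / (2 * INR (S n) + 1)))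
      with (H (2*n+1) + A (2*n+1) + 2 * / (2 * INR (S n) + 1)) by (rewrite IH; ring).
    rewrite !S_INR, !plus_INR, !mult_INR. simpl (INR 2). rewrite ?INR_0, ?INR_1.
    pose proof (pos_INR n) as Hn0. field. lra.
Qed.

Lemma Bs_eq m : Bs (S m) = sum_f_R0 (fun x => / INR (x + 1) * A (x + 1)) m.
Proof.
  induction m as [|m IH].
  - simpl. ring.
  - cbn [Bs sum_f_R0] in *. rewrite <- IH. cbn [Bs].
    replace (S m + 1)%nat with (S (S m)) by lia. reflexivity.
Qed.

Theorem proposition7 (n : nat) :
  infinite_sum (fun i : nat => term n (S i))
    (2 * ln 2 * sum_f_R0 (fun k : nat => / (2 * INR k + 1)) n
     - sum_f 1 (2 * n + 1) (fun j : nat => / INR j * A j)).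
Proof.
  assert (L : Un_cv (fun N => P n (S N)) (Fl (2*n+1) + 0)).
  { apply (cv_shift (fun N => P n N) _ S 0); [|intro; lia].
    assert (E : (fun N => P n N) = (fun N => Fs N (2*n+1) + Rs (fr (2*n+1)) N (2*n+1)))
      by (apply functional_extensionality; intro; apply P_eq).
    rewrite E. apply (CV_plus (fun N => Fs N (2*n+1)) (fun N => Rs (fr (2*n+1)) N (2*n+1))).
    apply Fs_cv. apply Rs_cv. }
  rewrite Rplus_0_r, Fl_eq, HA_odd in L.
  unfold sum_f. replace (2*n+1-1)%nat with (2*n)%nat by lia.
  replace (2*n+1)%nat with (S (2*n)) in L by lia. rewrite Bs_eq in L.
  intros eps He. destruct (L eps He) as [N HN]. exists N. intros k Hk.
  rewrite sum_P. replace (2 * ln 2 * sum_f_R0 (fun k0 : nat => / (2 * INR k0 + 1)) n)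
    with (ln 2 * (2 * sum_f_R0 (fun k0 : nat => / (2 * INR k0 + 1)) n)) by ring.
  apply HN. exact Hk.
Qed.
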